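(* For every node $v\in\mathcal V$ and observed histories $(y,\tilde M_y)$, $(z,\tilde M_z)$ with $\Pr(\mathbf M[y]=\tilde M_y)>0$, $\Pr(\mathbf M[z]=\tilde M_z)>0$ and $(y,\tilde M_y)\subset(z,\tilde M_z)$, we have $\Delta(v\mid y,\tilde M_y)\ge\Delta(v\mid z,\tilde M_z)$.
   Context: Model (multi-seeding with intermediary constraints). $\mathcal G=(\mathcal V,\mathcal E)$ is a finite directed graph; for an arc $e=(u,v)$, $u$ is called the head node of $e$ and influence can pass from $u$ to $v$. Each arc $e$ has an influence probability $\bar w(e)\in[0,1]$ and each node $v$ has a reward $\mathbf r(v)\ge 0$. A seeding sequence is a finite sequence $y=(v_1,\dots,v_t)$ of nodes (repetitions allowed), $|y|=t$; $a@b$ denotes concatenation; $y\subset z$ for sequences means $y$ is a prefix of $z$. A realization matrix is an array $M=(M(e,j))_{e\in\mathcal E,\,j\ge 1}$ with entries in $\{0,1\}$; $M(e,j)$ is the realization of arc $e$ the $j$-th time $e$ is observed. The random realization matrix $\mathbf M$ has independent entries $\mathbf M(e,j)\sim\mathrm{Bernoulli}(\bar w(e))$. Given $y=(v_1,\dots,v_t)$ and $M$, rounds $\tau=1,\dots,t$ are run on graphs $\mathcal G_\tau=(\mathcal V,\mathcal E_\tau)$, $\mathcal E_1=\mathcal E$: in round $\tau$ the seed $v_\tau$ is activated and an independent-cascade diffusion runs on $\mathcal G_\tau$: each node activated in round $\tau$ observes each of its outgoing arcs $e\in\mathcal E_\tau$ once in that round; if $e$ was observed $k$ times before, its realization is $M(e,k+1)$;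 if it equals $1$, the other endpoint of $e$ becomes activated in round $\tau$. After round $\tau$, for every node activated in round $\tau$ other than $v_\tau$ (an intermediary), all arcs pointing into that node are removed, giving $\mathcal E_{\tau+1}$. The partial matrix $M[y]$ agrees with $M$ on the entries observed during this process and equals ''?'' elsewhere. The objective $f(y,M)=\sum_{v\in S}\mathbf r(v)$, where $S$ is the set of nodes $v$ with $v\in y$ or with some arc $(u,v)$ having an observed entry equal to $1$; $f(y,M)$ depends only on $(y,M[y])$ and is also written $f(y,\tilde M_y)$. An observed history is a pair $(y,\tilde M_y)$ where $\tilde M_y$ is a possible value of $\mathbf M[y]$. Sub-history: $(y,\tilde M_y)\subset(z,\tilde M_z)$ means $y\subset z$ and there exists a realization matrix $M$ with $M[y]=\tilde M_y$ and $M[z]=\tilde M_z$. The expected marginal gain is $\Delta(v\mid y,\tilde M_y)=\mathbb E[f(y@(v),\mathbf M)\mid \mathbf M[y]=\tilde M_y]-f(y,\tilde M_y)$. *)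

(* Defs.v *)
From HB Require Import structures.
From mathcomp Require Import all_boot all_order all_algebra.
From Stdlib Require Import ClassicalEpsilon.
Set Implicit Arguments. Unset Strict Implicit. Unset Printing Implicit Defensive.
Import Order.TTheory GRing.Theory Num.Theory.
Local Open Scope ring_scope.

Definition ind (R : pzRingType) (P : Prop) : R :=
  if excluded_middle_informative P then 1 else 0.

Section Model.
Variables (V : finType) (adj : rel V).

Definition garc : finType := {x : V * V | adj x.1 x.2}.
Definition src (e : garc) : V := (val e).1.
Definition dst (e : garc) : V := (val e).2.

(* Realization matrix; column index is 0-based: M e j is the paper's M(e, j+1). *)
Definition realization := garc -> nat -> bool.
(* Partial matrix: Some b = observed entry b, None = "?". *)
Definition pmatrix := garc -> nat -> option bool.

(* State before a round: number of times each garc was observed so far,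
   and the set of nodes whose incoming arcs have been removed. *)
Definition state := ((garc -> nat) * {set V})%type.

(* Nodes activated in the round with seed s: reachable from s through arcs
   of the current graph (garc not pointing into a removed node) whose next
   realization is 1. *)
Definition activated (M : realization) (st : state) (s : V) : {set V} :=
  [set x | connect (fun a b => [exists e : garc,
              [&& src e == a, dst e == b, dst e \notin st.2 & M e (st.1 e)]]) s x].

(* One round: every activated node observes each of its outgoing arcs of the
   current graph once; intermediaries (activated nodes other than the seed)
   get their incoming arcs removed. *)
Definition round (M : realization) (st : state) (s : V) : state :=
  let A := activated M st s in
  (fun e => (st.1 e + ((src e \in A) && (dst e \notin st.2)))%N, st.2 :|: (A :\ s)).

Definition run (M : realization) (y : seq V) : state :=
  foldl (round M) (fun _ => 0%N, set0) y.

Definition counts (M : realization) (y : seq V) : garc -> nat := (run M y).1.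

Definition partial (M : realization) (y : seq V) : pmatrix :=
  fun e j => if (j < counts M y e)%N then Some (M e j) else None.

Definition subhistory (y : seq V) (Mty : pmatrix) (z : seq V) (Mtz : pmatrix) : Prop :=
  prefix y z /\ exists M : realization, partial M y = Mty /\ partial M z = Mtz.

Variable R : realFieldType.

Definition fhist (r : V -> R) (y : seq V) (Mt : pmatrix) : R :=
  \sum_(v : V) r v * ind R ((v \in y) \/ exists e j, dst e = v /\ Mt e j = Some true).

Definition f (r : V -> R) (y : seq V) (M : realization) : R := fhist r y (partial M y).

(* Probability space: the first D columns of the realization matrix, with
   independent Bernoulli(w e) entries (the marginal of the law of M). *)
Definition fmat (D : nat) := {ffun garc * 'I_D -> bool}.

Definition weight (w : garc -> R) (D : nat) (m : fmat D) : R :=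
  \prod_(k : garc * 'I_D) (if m k then w k.1 else 1 - w k.1).

Definition ext (D : nat) (m : fmat D) : realization :=
  fun e j => if insub j is Some i then m (e, i) else false.

Definition prob (w : garc -> R) (D : nat) (y : seq V) (Mt : pmatrix) : R :=
  \sum_(m : fmat D) weight w m * ind R (partial (ext m) y = Mt).

Definition cond_exp (w : garc -> R) (r : V -> R) (D : nat) (v : V) (y : seq V)
    (Mt : pmatrix) : R :=
  (\sum_(m : fmat D) weight w m * ind R (partial (ext m) y = Mt)
       * f r (rcons y v) (ext m)) / prob w D y Mt.

Definition Delta (w : garc -> R) (r : V -> R) (D : nat) (v : V) (y : seq V)
    (Mt : pmatrix) : R :=
  cond_exp w r D v y Mt - fhist r y Mt.

End Model.

(* Main.v *)
Require Import Defs.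
From HB Require Import structures.
From mathcomp Require Import all_boot all_order all_algebra.
From Stdlib Require Import ClassicalEpsilon FunctionalExtensionality Classical.
From mathcomp Require Import zify ring.
Import Order.TTheory GRing.Theory Num.Theory.
Set Implicit Arguments. Unset Strict Implicit. Unset Printing Implicit Defensive.

Lemma connect_agree (T : finType) (r1 r2 : rel T) s :
  (forall a b, connect r1 s a -> r1 a b = r2 a b) -> connect r1 s =1 connect r2 s.
Proof.
move=> H x.
have G1 : forall p a, connect r1 s a -> path r1 a p -> path r2 a p.
  elim=> [//|b p IH] a ca /= /andP[rab pp].
  have r2ab : r2 a b by rewrite -H.
  rewrite r2ab /=; apply: IH pp; exact: connect_trans ca (connect1 rab).
have G2 : forall p a, connect r1 s a -> path r2 a p -> path r1 a p.
  elim=> [//|b p IH] a ca /= /andP[rab pp].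
  have r1ab : r1 a b by rewrite H.
  rewrite r1ab /=; apply: IH pp; exact: connect_trans ca (connect1 r1ab).
apply/idP/idP.
- move/connectP=> [p pth ->]; apply/connectP; exists p => //.
  by apply: G1 pth; exact: connect0.
- move/connectP=> [p pth ->]; apply/connectP; exists p => //.
  by apply: G2 pth; exact: connect0.
Qed.

Lemma connect_last (T : finType) (e : rel T) s x :
  connect e s x -> x = s \/ exists2 a, connect e s a & e a x.
Proof.
move/connectP=> [p pth ->]; elim/last_ind: p pth => [|p b _]; first by left.
rewrite rcons_path last_rcons => /andP[pp rb]; right; exists (last s p) => //.
by apply/connectP; exists p.
Qed.

Section Det.
Variables (V : finType) (adj : rel V).
Implicit Types (M : realization adj) (st : state adj).

Lemma run_rcons M y s : run M (rcons y s) = round M (run M y) s.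
Proof. by rewrite /run foldl_rcons. Qed.

Lemma foldl_mono M st t :
  st.2 \subset (foldl (round M) st t).2 /\
  forall e, (st.1 e <= (foldl (round M) st t).1 e)%N.
Proof.
elim: t st => [|s t IH] st /=; first by split.
have [h1 h2] := IH (round M st s); split.
  by apply: subset_trans h1; rewrite /round /= subsetUl.
by move=> e; apply: leq_trans (h2 e); rewrite /round /= leq_addr.
Qed.

Lemma foldl_bound M st t e :
  ((foldl (round M) st t).1 e <= st.1 e + size t)%N.
Proof.
elim: t st => [|s t IH] st /=; first by rewrite addn0.
apply: leq_trans (IH _) _; rewrite /round /=.
by case: (_ && _) => /=; lia.
Qed.

Lemma counts_bound M y e : (counts M y e <= size y)%N.
Proof. exact: (foldl_bound M (fun _ => 0%N, set0) y e). Qed.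

Lemma run_det M M' y :
  (forall e j, (j < counts M y e)%N -> M e j = M' e j) -> run M y = run M' y.
Proof.
elim/last_ind: y => [//|y s IH] H.
have IH' : run M y = run M' y.
  apply: IH => e j hj; apply: H; apply: leq_trans hj _.
  by rewrite /counts run_rcons /round /= leq_addr.
rewrite !run_rcons -IH' /round.
suff -> : activated M' (run M y) s = activated M (run M y) s by [].
set st := run M y.
apply/setP => x; rewrite !inE; apply/esym/connect_agree => a b ca.
apply: eq_existsb => e.
case: (src e =P a) => //= hs; case: (dst e == b) => //=.
case hd: (dst e \notin st.2) => //=.
apply: H; rewrite /counts run_rcons /round /= -/st.
rewrite /activated inE hs ca hd /=.
by rewrite addn1.
Qed.

Lemma partial_det M M' y :
  (forall e j, (j < counts M y e)%N -> M e j = M' e j) -> partial M y = partial M' y.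
Proof.
move=> H; have Hr := run_det H.
apply: functional_extensionality => e; apply: functional_extensionality => j.
rewrite /partial /counts -Hr; case: ifP => // hj; congr Some; exact: H.
Qed.

Lemma counts_of_partial M M' y : partial M y = partial M' y -> counts M y = counts M' y.
Proof.
move=> H; apply: functional_extensionality => e.
have He j := congr1 (fun f => f e j) H; rewrite /partial /= in He.
case: (ltngtP (counts M y e) (counts M' y e)) => // h.
  by have := He (counts M y e); rewrite ltnn h.
by have := He (counts M' y e); rewrite ltnn h.
Qed.

Lemma agree_of_partial M M' y : partial M y = partial M' y ->
  forall e j, (j < counts M y e)%N -> M e j = M' e j.
Proof.
move=> H e j hj; have He := congr1 (fun f => f e j) H; rewrite /partial /= in He.
move: He; rewrite hj -(counts_of_partial H) hj; by case.
Qed.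

End Det.

Local Open Scope ring_scope.

Lemma indT (R : pzRingType) (P : Prop) : P -> ind R P = 1.
Proof. by rewrite /ind; case: excluded_middle_informative. Qed.
Lemma indF (R : pzRingType) (P : Prop) : ~ P -> ind R P = 0.
Proof. by rewrite /ind; case: excluded_middle_informative. Qed.
Lemma ind_ge0 (R : numDomainType) (P : Prop) : 0 <= ind R P.
Proof. by rewrite /ind; case: excluded_middle_informative. Qed.

Lemma ind_cmp (R : numDomainType) (Pz Az Py Ay : Prop) :
  (Py -> Pz) -> (Az -> Ay) ->
  ind R (Pz \/ Az) - ind R Pz <= ind R (Py \/ Ay) - ind R Py.
Proof.
move=> hP hA; case: (classic Pz) => hz.
  rewrite (indT _ hz) (@indT _ (Pz \/ Az)); last by left.
  rewrite subrr.
  case: (classic Py) => hy.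
    by rewrite (indT _ hy) (@indT _ (Py \/ Ay)) ?subrr //; left.
  by rewrite (indF _ hy) subr0 ind_ge0.
have ny : ~ Py by move/hP.
rewrite (indF _ hz) (indF _ ny) !subr0.
case: (classic Az) => ha.
  by rewrite (@indT _ (Pz \/ Az)) ?(@indT _ (Py \/ Ay)) //; right => //; exact: hA.
by rewrite indF ?ind_ge0 //; case.
Qed.

Section Core.
Variables (V : finType) (adj : rel V) (R : realFieldType) (r : V -> R) (v : V).
Implicit Types (M : realization adj) (st : state adj).

Definition hit (y : seq V) (Mt : pmatrix adj) (u : V) : Prop :=
  (u \in y) \/ exists e j, dst e = u /\ Mt e j = Some true.

Lemma gain_pred M y u :
  hit (rcons y v) (partial M (rcons y v)) u <->
  (hit y (partial M y) u \/ u \in activated M (run M y) v).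
Proof.
rewrite /hit /partial /counts run_rcons /round /=.
set st := run M y; set A := activated M st v.
split.
- case=> [|[e [j [de]]]].
    rewrite mem_rcons inE => /orP[/eqP ->|uy]; last by left; left.
    by right; rewrite /A /activated inE connect0.
  case: ifP => // hj [hM].
  case: (ltnP j (st.1 e)) => hj'.
    by left; right; exists e, j; split => //; rewrite hj' hM.
  move: hj; rewrite addnC; case hc: (_ && _) => /=; last by rewrite add0n ltnNge hj'.
  rewrite add1n ltnS => hj2.
  have ej : j = st.1 e by apply/eqP; rewrite eqn_leq hj2 hj'.
  move/andP: hc => [sA dR]; right; rewrite -de /A /activated inE.
  apply: (connect_trans (y := src e)); first by move: sA; rewrite inE.
  by apply: connect1; apply/existsP; exists e; rewrite !eqxx dR -ej hM.
- case=> [[uy|[e [j [de]]]]|uA].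
  + by left; rewrite mem_rcons inE uy orbT.
  + case: ifP => // hj [hM]; right; exists e, j; split => //.
    by rewrite (leq_trans hj) ?leq_addr // hM.
  + move: (uA); rewrite /A /activated inE => /connect_last [->|[a ca]].
      by left; rewrite mem_rcons mem_head.
    move=> /existsP[e /and4P[/eqP se /eqP de dR hM]].
    right; exists e, (st.1 e); split => //.
    have -> : src e \in A by rewrite /A /activated inE se.
    by rewrite dR addn1 ltnSn hM.
Qed.

Lemma gain_eq M y :
  f r (rcons y v) M - fhist r y (partial M y) =
  \sum_u r u * (ind R (hit y (partial M y) u \/ u \in activated M (run M y) v)
                - ind R (hit y (partial M y) u)).
Proof.
rewrite /f /fhist -sumrB; apply: eq_bigr => u _; rewrite mulrBr; congr (_ * _ - _).
rewrite /ind; do 2 case: excluded_middle_informative => //.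
- by move=> h1 h2; exfalso; apply: h1; apply/gain_pred.
- by move=> h1 h2; exfalso; apply: h2; apply/gain_pred.
Qed.

Hypothesis hr : forall u, 0 <= r u.

Lemma run_cat M y t : run M (y ++ t) = foldl (round M) (run M y) t.
Proof. by rewrite /run foldl_cat. Qed.

Lemma core M0 y t M M' :
  partial M (y ++ t) = partial M0 (y ++ t) -> partial M' y = partial M0 y ->
  (forall e, M e (counts M0 (y ++ t) e) = M' e (counts M0 y e)) ->
  f r (rcons (y ++ t) v) M - fhist r (y ++ t) (partial M0 (y ++ t))
  <= f r (rcons y v) M' - fhist r y (partial M0 y).
Proof.
move=> HM HM' Hf.
have rz : run M (y ++ t) = run M0 (y ++ t) by apply: run_det; exact: agree_of_partial HM.
have ry : run M' y = run M0 y by apply: run_det; exact: agree_of_partial HM'.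
have [mR mC] := foldl_mono M0 (run M0 y) t.
rewrite -run_cat in mR mC.
rewrite -{1}HM -HM' !gain_eq; apply: ler_sum => u _; apply: ler_wpM2l => //.
apply: ind_cmp.
  rewrite HM HM' /hit; case=> [uy|[e [j [de]]]]; first by left; rewrite mem_cat uy.
  rewrite /partial; case: ifP => // hj hM; right; exists e, j; split => //.
  by rewrite (leq_trans hj (mC e)).
rewrite rz ry /activated !inE; apply: connect_sub => a b.
move=> /existsP[e /and4P[h1 h2 h3 h4]]; apply: connect1; apply/existsP; exists e.
rewrite h1 h2 /=; apply/andP; split.
  by apply/negP => hin; move/negP: h3; apply; exact: (subsetP mR).
by move: h4; rewrite -/(counts M0 (y ++ t) e) Hf.
Qed.

End Core.

Lemma ind_iff (R : pzRingType) (P Q : Prop) : (P <-> Q) -> ind R P = ind R Q.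
Proof.
move=> h; rewrite /ind; do 2 case: excluded_middle_informative => //; by move=> a b; exfalso; tauto.
Qed.

Lemma delta_form (R : realFieldType) (I : finType) (a F : I -> R) c :
  0 < \sum_i a i ->
  (\sum_i a i * F i) / (\sum_i a i) - c = (\sum_i a i * (F i - c)) / (\sum_i a i).
Proof.
move=> hp.
have -> : \sum_i a i * (F i - c) = \sum_i a i * F i - c * \sum_i a i.
  by rewrite big_distrr -sumrB; apply: eq_bigr => i _; rewrite mulrBr; congr (_ - _); exact: mulrC.
have hP : \sum_i a i != 0 by rewrite gt_eqF.
move: hP; set P := \sum_i a i; set X := \sum_i a i * F i => hP; field; exact: hP.
Qed.

Section Prob.
Variables (V : finType) (adj : rel V) (R : realFieldType) (w : garc adj -> R) (D : nat).
Variables (cz cy : garc adj -> nat).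
Hypotheses (hcz : forall e, (cz e < D)%N) (hcy : forall e, (cy e < D)%N).

Lemma ext_ord (m : fmat adj D) e (i : 'I_D) : ext m e (val i) = m (e, i).
Proof. by rewrite /ext valK. Qed.

Lemma ext_lt (m : fmat adj D) e j (h : (j < D)%N) : ext m e j = m (e, Ordinal h).
Proof. by rewrite -ext_ord. Qed.

Definition phi1 (p : fmat adj D * fmat adj D) : fmat adj D :=
  [ffun k => if val k.2 == cz k.1 then ext p.2 k.1 (cy k.1) else p.1 k].
Definition phi2 (p : fmat adj D * fmat adj D) : fmat adj D :=
  [ffun k => if val k.2 == cy k.1 then ext p.1 k.1 (cz k.1) else p.2 k].
Definition phi p := (phi1 p, phi2 p).

Lemma ext_phi1_c p e : ext (phi1 p) e (cz e) = ext p.2 e (cy e).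
Proof. by rewrite (ext_lt _ _ (hcz e)) ffunE /= eqxx. Qed.
Lemma ext_phi2_c p e : ext (phi2 p) e (cy e) = ext p.1 e (cz e).
Proof. by rewrite (ext_lt _ _ (hcy e)) ffunE /= eqxx. Qed.
Lemma ext_phi1_ne p e j : j != cz e -> ext (phi1 p) e j = ext p.1 e j.
Proof.
move=> hj; case: (ltnP j D) => hD.
  by rewrite !(ext_lt _ _ hD) ffunE /= (negbTE hj).
by rewrite /ext insubN // -leqNgt.
Qed.
Lemma ext_phi2_ne p e j : j != cy e -> ext (phi2 p) e j = ext p.2 e j.
Proof.
move=> hj; case: (ltnP j D) => hD.
  by rewrite !(ext_lt _ _ hD) ffunE /= (negbTE hj).
by rewrite /ext insubN // -leqNgt.
Qed.

Lemma phiK : cancel phi phi.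
Proof.
case=> m1 m2; rewrite /phi; congr pair; apply/ffunP => k; rewrite ffunE /=.
  case: eqP => h; last by rewrite ffunE /= ifN //; apply/eqP.
  by rewrite ext_phi2_c /= -h ext_ord; case: k h.
case: eqP => h; last by rewrite ffunE /= ifN //; apply/eqP.
by rewrite ext_phi1_c /= -h ext_ord; case: k h.
Qed.

Definition tw e (b : bool) : R := if b then w e else 1 - w e.

Lemma weight_split (c : garc adj -> nat) (hc : forall e, (c e < D)%N) (m : fmat adj D) :
  weight w m = (\prod_e tw e (ext m e (c e))) *
               \prod_e \prod_(i | val i != c e) tw e (m (e, i)).
Proof.
rewrite /weight -big_split /=.
rewrite (eq_bigr (fun k => tw k.1 (m (k.1, k.2)))); last by case.
rewrite -(pair_bigA _ (fun e i => tw e (m (e, i)))) /=.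
apply: eq_bigr => e _.
rewrite (bigD1 (Ordinal (hc e))) //= (ext_lt _ _ (hc e)); congr (_ * _).
Qed.

Lemma weight_phi p : weight w (phi1 p) * weight w (phi2 p) = weight w p.1 * weight w p.2.
Proof.
rewrite (weight_split hcz (phi1 p)) (weight_split hcy (phi2 p)).
rewrite (weight_split hcz p.1) (weight_split hcy p.2).
rewrite (eq_bigr _ (fun e _ => congr1 (tw e) (ext_phi1_c p e))).
rewrite [X in _ * X * _](eq_bigr (fun e => \prod_(i | val i != cz e) tw e (p.1 (e, i)))); last first.
  move=> e _; apply: eq_bigr => i hi; by rewrite ffunE /= (negbTE hi).
rewrite (eq_bigr _ (fun e _ => congr1 (tw e) (ext_phi2_c p e))).
rewrite [X in _ * (_ * X)](eq_bigr (fun e => \prod_(i | val i != cy e) tw e (p.2 (e, i)))); last first.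
  move=> e _; apply: eq_bigr => i hi; by rewrite ffunE /= (negbTE hi).
ring.
Qed.

Lemma weight_ge0 (hw : forall e, 0 <= w e <= 1) (m : fmat adj D) : 0 <= weight w m.
Proof.
apply: prodr_ge0 => k _; case: (m k); have /andP[h0 h1] := hw k.1 => //.
by rewrite subr_ge0.
Qed.

End Prob.

Lemma cond_swap (V : finType) (adj : rel V) (A B M0 : realization adj) z :
  (forall e j, (j < counts M0 z e)%N -> A e j = B e j) ->
  partial A z = partial M0 z -> partial B z = partial M0 z.
Proof.
move=> H HA; rewrite -HA; apply/esym/partial_det => e j.
by rewrite (counts_of_partial HA); exact: H.
Qed.

Unset Implicit Arguments.
Set Strict Implicit.

Theorem lemma2 (R : realFieldType) (V : finType) (adj : rel V)
  (w : garc adj -> R) (r : V -> R)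
  (hw : forall e, 0 <= w e <= 1) (hr : forall u, 0 <= r u)
  (D : nat) (v : V) (y z : seq V) (Mty Mtz : pmatrix adj)
  (hD : (size z < D)%N)
  (hy : 0 < prob w D y Mty) (hz : 0 < prob w D z Mtz)
  (hsub : subhistory y Mty z Mtz) :
  Delta w r D v z Mtz <= Delta w r D v y Mty.
Proof.
case: hsub => /prefixP [t Ez] [M0 [HMy HMz]]; subst z Mty Mtz.
set cz := counts M0 (y ++ t); set cy := counts M0 y.
have hcz : forall e, (cz e < D)%N by move=> e; exact: leq_ltn_trans (counts_bound _ _ _) hD.
have hcy : forall e, (cy e < D)%N.
  move=> e; apply: leq_ltn_trans (counts_bound _ _ _) _; apply: leq_ltn_trans hD.
  by rewrite size_cat leq_addr.
rewrite /Delta /cond_exp; rewrite /prob in hy hz *.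
rewrite !delta_form //.
rewrite ler_pdivrMr // mulrAC ler_pdivlMr //.
rewrite big_distrl /= [X in _ <= X]mulrC big_distrl /=.
under eq_bigr => m _ do rewrite big_distrr /=.
under [X in _ <= X]eq_bigr => m _ do rewrite big_distrr /=.
rewrite !pair_bigA.
rewrite [X in X <= _](reindex_inj (can_inj (phiK hcz hcy))).
apply: ler_sum => p _ /=.
have E1 : partial (ext (phi1 cz cy p)) (y ++ t) = partial M0 (y ++ t) <->
          partial (ext p.1) (y ++ t) = partial M0 (y ++ t).
  split; apply: cond_swap => e j hj.
    by rewrite ext_phi1_ne // neq_ltn hj.
  by rewrite ext_phi1_ne // neq_ltn hj.
have E2 : partial (ext (phi2 cz cy p)) y = partial M0 y <->
          partial (ext p.2) y = partial M0 y.
  split; apply: cond_swap => e j hj.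
    by rewrite ext_phi2_ne // neq_ltn hj.
  by rewrite ext_phi2_ne // neq_ltn hj.
rewrite (ind_iff _ E1) (ind_iff _ E2).
case: (classic (partial (ext p.1) (y ++ t) = partial M0 (y ++ t))) => h1; last first.
  by rewrite (indF _ h1) !(mulr0, mul0r).
case: (classic (partial (ext p.2) y = partial M0 y)) => h2; last first.
  by rewrite (indF _ h2) !(mulr0, mul0r).
rewrite !indT // !mulr1 mulrAC (weight_phi w hcz hcy) [X in _ <= X]mulrA.
apply: ler_wpM2l; first by apply: mulr_ge0; apply: weight_ge0.
apply: core => //; first exact: (proj2 E1 h1).
by move=> e; exact: ext_phi1_c.
Qed.
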